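(* Let $d\geq2$ and let $f$, $S$, $T(r)$, $H(\underline{s})$, $\underline{S}$ be as in the context. Let $\underline{s}=(s_k)_{k\geq0}\in\underline{S}$ and $x,y\in H(\underline{s})$, and for $k\geq 0$ write $x^k=(x^k_1,\dots,x^k_d)=f^k(x)$ and $y^k=(y^k_1,\dots,y^k_d)=f^k(y)$. Then there exists $M>0$ with the following property: if $|y^k_d|>|x^k_d|+M$ for some $k\geq 0$, then $$|y^{k+1}_d|>\frac{\lambda}{3}\exp|y^k_d|+M\geq 5|x^{k+1}_d|+M.$$
   Context: Notation: for $x=(x_1,\dots,x_d)\in\mathbb R^d$, $\|x\|$ is the Euclidean norm, $H^+=\{x:x_d\geq 0\}$. Construction of $F$: let $F_0$ be a bi-Lipschitz homeomorphism from the half-cube $[-1,1]^{d-1}\times[0,1]$ onto the upper half-ball $\{x:\|x\|\leq 1,\ x_d\geq 0\}$ which maps the face $[-1,1]^{d-1}\times\{1\}$ onto the hemisphere $\{x:\|x\|=1,\ x_d\geq 0\}$ (hence the rest of the boundary of the half-cube onto the flat disk $\{x:\|x\|\leq1,x_d=0\}$). Put $F=F_0$ on the half-cube and $F(x)=\exp(x_d-1)F_0(x_1,\dots,x_{d-1},1)$ for $x\in[-1,1]^{d-1}\times(1,\infty)$; then $F$ maps $[-1,1]^{d-1}\times[0,\infty)$ bijectively onto $H^+$. Extend $F$ to $F:\mathbb R^d\to\mathbb R^d$ by repeated reflections: if $\rho$ is the reflection in one of the hyperplanes $\{x_j=m\}$ ($1\leq j\leq d-1$, $m$ an odd integer) or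 $\{x_d=0\}$ bounding a cell on which $F$ is already defined, set $F(\rho(x))=\tau(F(x))$, where $\tau(y_1,\dots,y_d)=(y_1,\dots,y_{d-1},-y_d)$. $F$ is locally bi-Lipschitz; let $\ell(DF(x))=\inf_{\|y\|=1}\|DF(x)(y)\|$ and $\beta=\operatorname{ess\,inf}_{x}\ell(DF(x))>0$. Fix $\lambda>1/\beta$ and put $f=\lambda F$. Let $S=\mathbb Z^{d-1}\times\{-1,1\}$ and for $r\in S$ let $T(r)=\{x:|x_j-2r_j|\leq 1 \ (1\leq j\leq d-1),\ r_dx_d\geq 0\}$. For a sequence $\underline{s}=(s_k)_{k\geq0}$ in $S$ let $H(\underline{s})=\{x: f^k(x)\in T(s_k)\ \forall k\geq 0\}$ ($f^k$ the $k$-th iterate), and let $\underline{S}$ be the set of sequences in $S$ with $H(\underline{s})\neq\emptyset$. *)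

(* Defs.v *)
From Stdlib Require Import Reals ZArith.
From Coquelicot Require Import Rbar Lub.
From mathcomp Require Import ssreflect ssrfun ssrbool eqtype ssrnat seq choice fintype.

Set Implicit Arguments.
Unset Strict Implicit.
Open Scope R_scope.

(* A point of R^d, d = n+1, is written as (x_1..x_{d-1}, x_d) = (x.1, x.2). *)
Definition pt (n : nat) : Type := (('I_n -> R) * R)%type.

Definition sumI (n : nat) (g : 'I_n -> R) : R := foldr Rplus 0 (map g (enum 'I_n)).
Definition prodI (n : nat) (g : 'I_n -> R) : R := foldr Rmult 1 (map g (enum 'I_n)).
Definition sumIZ (n : nat) (g : 'I_n -> Z) : Z := foldr Z.add 0%Z (map g (enum 'I_n)).

Definition pnorm {n} (x : pt n) : R := sqrt (sumI (fun i => (x.1 i) ^ 2) + x.2 ^ 2).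
Definition padd {n} (x y : pt n) : pt n := (fun i => x.1 i + y.1 i, x.2 + y.2).
Definition pscale {n} (c : R) (x : pt n) : pt n := (fun i => c * x.1 i, c * x.2).
Definition psub {n} (x y : pt n) : pt n := (fun i => x.1 i - y.1 i, x.2 - y.2).

Definition tau {n} (x : pt n) : pt n := (x.1, - x.2).

Definition half_cube {n} (x : pt n) : Prop := (forall i, -1 <= x.1 i <= 1) /\ 0 <= x.2 <= 1.
Definition top_face {n} (x : pt n) : Prop := (forall i, -1 <= x.1 i <= 1) /\ x.2 = 1.
Definition half_ball {n} (x : pt n) : Prop := pnorm x <= 1 /\ 0 <= x.2.
Definition hemisphere {n} (x : pt n) : Prop := pnorm x = 1 /\ 0 <= x.2.

(* F0 : bi-Lipschitz homeomorphism half-cube -> upper half-ball, mapping the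
   top face onto the hemisphere (only its values on the half-cube matter). *)
Definition admissible_F0 {n} (F0 : pt n -> pt n) : Prop :=
  (forall x, half_cube x -> half_ball (F0 x)) /\
  (forall y, half_ball y -> exists x, half_cube x /\ F0 x = y) /\
  (forall x y, half_cube x -> half_cube y -> F0 x = F0 y -> x = y) /\
  (exists L, 0 < L /\ forall x y, half_cube x -> half_cube y ->
      pnorm (psub (F0 x) (F0 y)) <= L * pnorm (psub x y) /\
      pnorm (psub x y) <= L * pnorm (psub (F0 x) (F0 y))) /\
  (forall x, top_face x -> hemisphere (F0 x)) /\
  (forall y, hemisphere y -> exists x, top_face x /\ F0 x = y).

(* F on the strip [-1,1]^{d-1} x [0,oo) *)
Definition F_strip {n} (F0 : pt n -> pt n) (x : pt n) : pt n :=
  if Rle_dec x.2 1 then F0 x else pscale (exp (x.2 - 1)) (F0 (x.1, 1)).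

(* Extension by repeated reflections in the hyperplanes x_j = m (m odd) and
   x_d = 0.  A coordinate a in [2m-1, 2m+1] is brought back to [-1,1] by |m|
   reflections, to (-1)^m (a - 2m); each reflection contributes a tau. *)
Definition refl_count (a : R) : Z := Int_part ((a + 1) / 2).
Definition fold_coord (a : R) : R :=
  (if Z.even (refl_count a) then 1 else -1) * (a - 2 * IZR (refl_count a)).

Definition F_full {n} (F0 : pt n -> pt n) (x : pt n) : pt n :=
  let v := F_strip F0 (fun i => fold_coord (x.1 i), Rabs x.2) in
  let odd_refl := xorb (Z.odd (sumIZ (fun i => refl_count (x.1 i))))
                       (if Rlt_dec x.2 0 then true else false) in
  if odd_refl then tau v else v.

Definition f_map {n} (F0 : pt n -> pt n) (lam : R) (x : pt n) : pt n :=
  pscale lam (F_full F0 x).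

Definition is_linear_map {n} (L : pt n -> pt n) : Prop :=
  forall a b c, L (padd a b) = padd (L a) (L b) /\ L (pscale c a) = pscale c (L a).

Definition is_fderiv {n} (G : pt n -> pt n) (x : pt n) (L : pt n -> pt n) : Prop :=
  is_linear_map L /\
  forall eps, 0 < eps -> exists delta, 0 < delta /\ forall h, pnorm h < delta ->
    pnorm (psub (psub (G (padd x h)) (G x)) (L h)) <= eps * pnorm h.

Definition ell {n} (L : pt n -> pt n) : Rbar :=
  Glb_Rbar (fun r => exists y : pt n, pnorm y = 1 /\ r = pnorm (L y)).

Definition in_box {n} (a b : pt n) (x : pt n) : Prop :=
  (forall i, a.1 i <= x.1 i <= b.1 i) /\ a.2 <= x.2 <= b.2.
Definition box_vol {n} (a b : pt n) : R := prodI (fun i => b.1 i - a.1 i) * (b.2 - a.2).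
Definition null_set {n} (N : pt n -> Prop) : Prop :=
  forall eps, 0 < eps -> exists a b : nat -> pt n,
    (forall k, (forall i, (a k).1 i <= (b k).1 i) /\ (a k).2 <= (b k).2) /\
    (forall x, N x -> exists k, in_box (a k) (b k) x) /\
    (forall K, sum_f_R0 (fun k => box_vol (a k) (b k)) K <= eps).

Definition ess_inf_ell {n} (G : pt n -> pt n) : Rbar :=
  Lub_Rbar (fun c => null_set (fun x =>
    ~ (exists L, is_fderiv G x L /\ Rbar_le (Coquelicot.Rbar.Finite c) (ell L)))).

Definition Zpt (n : nat) : Type := (('I_n -> Z) * Z)%type.
Definition in_S {n} (r : Zpt n) : Prop := r.2 = 1%Z \/ r.2 = (-1)%Z.
Definition T_cell {n} (r : Zpt n) (x : pt n) : Prop :=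
  (forall j, Rabs (x.1 j - 2 * IZR (r.1 j)) <= 1) /\ 0 <= IZR r.2 * x.2.
Definition H_set {n} (f : pt n -> pt n) (s : nat -> Zpt n) (x : pt n) : Prop :=
  forall k, T_cell (s k) (Nat.iter k f x).
Definition S_bar {n} (f : pt n -> pt n) (s : nat -> Zpt n) : Prop :=
  (forall k, in_S (s k)) /\ exists x, H_set f s x.

(* Main.v *)
Require Import Defs.
From Stdlib Require Import Reals ZArith Lra Factorial.
From Coquelicot Require Import Rbar Lub.
Open Scope R_scope.
Lemma expm1_ge : 11/30 <= exp (-1).
Proof.
  unfold exp; case (exist_exp (-1)) as (x,e); simpl in |- *;
    unfold exp_in in e;
      assert (H := alternated_series_ineq (fun i:nat => / INR (fact i)) x 2).
  cut
    (sum_f_R0 (tg_alt (fun i:nat => / INR (fact i))) (S (2 * 2)) <= x <=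
      sum_f_R0 (tg_alt (fun i:nat => / INR (fact i))) (2 * 2)).
  { intro H0; destruct H0 as [H0 _]; simpl in H0; unfold tg_alt in H0;
      simpl in H0. lra. }
  apply H.
  - unfold Un_decreasing; intros;
      apply Rmult_le_reg_l with (INR (fact n)).
    { apply INR_fact_lt_0. }
    apply Rmult_le_reg_l with (INR (fact (S n))).
    { apply INR_fact_lt_0. }
    rewrite Rinv_r.
    2:{ apply INR_fact_neq_0. }
    rewrite Rmult_1_r; rewrite Rmult_comm; rewrite Rmult_assoc;
      rewrite Rinv_l.
    2:{ apply INR_fact_neq_0. }
    rewrite Rmult_1_r; apply le_INR; apply fact_le; apply Nat.le_succ_diag_r.
  - assert (H0 := cv_speed_pow_fact 1); unfold Un_cv; unfold Un_cv in H0;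
      intros; elim (H0 _ H1); intros; exists x0; intros;
      unfold Rdist in H2; unfold Rdist;
      replace (/ INR (fact n)) with (1 ^ n / INR (fact n));auto.
    unfold Rdiv; rewrite pow1; rewrite Rmult_1_l; reflexivity.
  - unfold infinite_sum in e; unfold Un_cv, tg_alt; intros; elim (e _ H0);
      intros; exists x0; intros;
      replace (sum_f_R0 (fun i:nat => (-1) ^ i * / INR (fact i)) n) with
      (sum_f_R0 (fun i:nat => / INR (fact i) * (-1) ^ i) n);auto.
    apply sum_eq; intros; apply Rmult_comm.
Qed.

From mathcomp Require Import ssreflect ssrfun ssrbool eqtype ssrnat seq choice fintype.
Open Scope R_scope.

Lemma foldr_nonneg (T : Type) (g : T -> R) (l : seq T) :
  (forall i, 0 <= g i) -> 0 <= foldr Rplus 0 (map g l).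
Proof. move=> Hg; elim: l => [|h l IH] /=; first lra. have := Hg h; lra. Qed.

Lemma foldr_ge (T : eqType) (g : T -> R) (l : seq T) x :
  (forall i, 0 <= g i) -> x \in l -> g x <= foldr Rplus 0 (map g l).
Proof.
move=> Hg; elim: l => [|h l IH] //=.
rewrite in_cons => /orP [/eqP ->|Hx].
- have := @foldr_nonneg _ g l Hg; lra.
- have := IH Hx; have := Hg h; lra.
Qed.

Lemma foldr_le (T : Type) (g : T -> R) (l : seq T) c :
  (forall i, g i <= c) -> foldr Rplus 0 (map g l) <= INR (size l) * c.
Proof.
move=> Hg; elim: l => [|h l IH] /=; first lra.
change (g h + foldr Rplus 0 (map g l) <= INR (S (size l)) * c); rewrite S_INR; have := Hg h; lra.
Qed.

Lemma sumI_ge n (g : 'I_n -> R) i : (forall i, 0 <= g i) -> g i <= sumI g.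
Proof. move=> Hg; apply: foldr_ge => //; exact: mem_enum. Qed.

Lemma sumI_le n (g : 'I_n -> R) c : (forall i, g i <= c) -> sumI g <= INR n * c.
Proof. move=> Hg; have := @foldr_le _ g (enum 'I_n) c Hg; by rewrite size_enum_ord. Qed.

Lemma sumI_nonneg n (g : 'I_n -> R) : (forall i, 0 <= g i) -> 0 <= sumI g.
Proof. exact: foldr_nonneg. Qed.

Lemma comp1_le n (w : pt n) i : Rabs (w.1 i) <= pnorm w.
Proof.
rewrite /pnorm. rewrite -sqrt_Rsqr_abs. apply: sqrt_le_1_alt.
have H := @sumI_ge _ _ i (fun j => pow2_ge_0 (w.1 j)).
have := pow2_ge_0 w.2. rewrite /Rsqr /=. simpl in H. lra.
Qed.

Lemma comp2_le n (w : pt n) : Rabs w.2 <= pnorm w.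
Proof.
rewrite /pnorm. rewrite -sqrt_Rsqr_abs. apply: sqrt_le_1_alt.
have H := @sumI_nonneg _ _ (fun j => pow2_ge_0 (w.1 j)).
rewrite /Rsqr /=. simpl in H. lra.
Qed.

Lemma fold_bound a : -1 <= fold_coord a <= 1.
Proof.
rewrite /fold_coord /refl_count.
have [H1 H2] := base_Int_part ((a + 1) / 2).
case: (Z.even _); lra.
Qed.

Lemma Ffull_comp n (F0 : pt n -> pt n) a :
  (F_full F0 a).1 = (F_strip F0 (fun i => fold_coord (a.1 i), Rabs a.2)).1 /\
  Rabs (F_full F0 a).2 = Rabs (F_strip F0 (fun i => fold_coord (a.1 i), Rabs a.2)).2.
Proof.
rewrite /F_full; case: (xorb _ _) => /=; split => //; by rewrite Rabs_Ropp.
Qed.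

Lemma Ffull_bound n (F0 : pt n -> pt n) a : admissible_F0 F0 ->
  (forall i, Rabs ((F_full F0 a).1 i) <= exp (Rabs a.2)) /\
  Rabs (F_full F0 a).2 <= exp (Rabs a.2).
Proof.
move=> [Hhb [_ [_ [_ [Htop _]]]]].
have [-> ->] := @Ffull_comp _ F0 a.
have He1 : 1 <= exp (Rabs a.2) by have := exp_ineq1_le (Rabs a.2); have := Rabs_pos a.2; lra.
rewrite /F_strip /=. case: (Rle_dec (Rabs a.2) 1) => Hle.
- have [Hn _] : half_ball (F0 (fun i => fold_coord (a.1 i), Rabs a.2)).
    apply: Hhb; split => /=; [move=> i; exact: fold_bound | split; [exact: Rabs_pos|exact: Hle]].
  split.
  + move=> i; have H := @comp1_le _ (F0 (fun i => fold_coord (a.1 i), Rabs a.2)) i.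
    simpl. lra.
  + have H := @comp2_le _ (F0 (fun i => fold_coord (a.1 i), Rabs a.2)).
    simpl. lra.
- have [Hn _] : hemisphere (F0 (fun i => fold_coord (a.1 i), 1)).
    apply: Htop; split => /=; [move=> i; exact: fold_bound | done].
  have Hle2 : exp (Rabs a.2 - 1) <= exp (Rabs a.2) by apply: Rlt_le; apply: exp_increasing; lra.
  have Hp := exp_pos (Rabs a.2 - 1).
  split => [i|] /=; rewrite Rabs_mult (Rabs_pos_eq (exp _)); try lra.
  + have := @comp1_le _ (F0 (fun i => fold_coord (a.1 i), 1)) i; rewrite Hn => H.
    have := Rmult_le_compat_l _ _ _ (Rlt_le _ _ Hp) H; lra.
  + have := @comp2_le _ (F0 (fun i => fold_coord (a.1 i), 1)); rewrite Hn => H.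
    have := Rmult_le_compat_l _ _ _ (Rlt_le _ _ Hp) H; lra.
Qed.

Lemma Ffull_big n (F0 : pt n -> pt n) a : admissible_F0 F0 -> 1 < Rabs a.2 ->
  exists w : pt n, pnorm w = 1 /\ 0 <= w.2 /\
   (forall i, (F_full F0 a).1 i = exp (Rabs a.2 - 1) * w.1 i) /\
   Rabs (F_full F0 a).2 = exp (Rabs a.2 - 1) * w.2.
Proof.
move=> [_ [_ [_ [_ [Htop _]]]]] H1.
have [-> ->] := @Ffull_comp _ F0 a.
rewrite /F_strip /=. case: (Rle_dec (Rabs a.2) 1) => Hle; first lra.
have [Hn Hw] : hemisphere (F0 (fun i => fold_coord (a.1 i), 1)).
  apply: Htop; split => /=; [move=> i; exact: fold_bound | done].
exists (F0 (fun i => fold_coord (a.1 i), 1)); do 3 split => //.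
rewrite Rabs_mult (Rabs_pos_eq (exp _)); [by rewrite (Rabs_pos_eq (F0 _).2) | left; apply exp_pos].
Qed.


Lemma abs_cell u c v : Rabs (u - c) <= 1 -> Rabs (v - c) <= 1 -> Rabs u <= Rabs v + 2.
Proof. intros; split_Rabs; lra. Qed.

Lemma exp1_le : exp 1 <= 30/11.
Proof.
have H := expm1_ge. have E : exp 1 * exp (-1) = 1 by rewrite -exp_plus; replace (1 + -1) with 0 by ring; apply exp_0.
have := exp_pos 1. nra.
Qed.

Lemma exp_sq_ge M : 1 <= M -> M * M / 4 <= exp (M - 1).
Proof.
move=> HM. have E : exp (M - 1) = exp ((M-1)/2) * exp ((M-1)/2) by rewrite -exp_plus; f_equal; field.
have H := exp_ineq1_le ((M-1)/2). rewrite E. nra.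
Qed.

Theorem lemma1 (n : nat) (F0 : pt n -> pt n) (lam : R)
  (s : nat -> Zpt n) (x y : pt n) :
  (1 <= n)%nat ->
  admissible_F0 F0 ->
  0 < lam ->
  Rbar_lt (Coquelicot.Rbar.Finite (/ lam)) (ess_inf_ell (F_full F0)) ->
  S_bar (f_map F0 lam) s ->
  H_set (f_map F0 lam) s x ->
  H_set (f_map F0 lam) s y ->
  exists M, 0 < M /\
    forall k : nat,
      Rabs (Nat.iter k (f_map F0 lam) y).2 > Rabs (Nat.iter k (f_map F0 lam) x).2 + M ->
      Rabs (Nat.iter (S k) (f_map F0 lam) y).2
        > lam / 3 * exp (Rabs (Nat.iter k (f_map F0 lam) y).2) + M /\
      lam / 3 * exp (Rabs (Nat.iter k (f_map F0 lam) y).2) + M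
        >= 5 * Rabs (Nat.iter (S k) (f_map F0 lam) x).2 + M.
Proof.
move=> _ HF0 Hlam _ _ Hx Hy.
set K := 1 + 2 / lam.
have Hl2' : 0 < 2 / lam by apply: Rdiv_lt_0_compat; lra.
have HK : 1 <= K by rewrite /K; lra.
have Hn := pos_INR n.
have HnK : 0 <= INR n * K ^ 2 by apply: Rmult_le_pos => //; apply: pow2_ge_0.
have Hl2 : 0 < 880 / (9 * lam) by apply: Rdiv_lt_0_compat; lra.
set M := 14 + 11 * (INR n * K ^ 2) + 880 / (9 * lam).
exists M; split; first by rewrite /M; lra.
move=> k Hk.
set f := f_map F0 lam in Hx Hy Hk *.
set a := Nat.iter k f y in Hk *. set b := Nat.iter k f x in Hk *.
change (Nat.iter k.+1 f y) with (f a). change (Nat.iter k.+1 f x) with (f b).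
have HM1 : 14 <= M by rewrite /M; lra.
set A := Rabs a.2 in Hk *. set B := Rabs b.2 in Hk *.
have HB0 : 0 <= B by apply: Rabs_pos.
have HA1 : 1 < A by lra.
have [Hb1 Hb2] := @Ffull_bound _ F0 b HF0.
have [w [Hw1 [Hw2 [Hwa1 Hwa2]]]] := @Ffull_big _ F0 a HF0 HA1.
rewrite -/A in Hwa1 Hwa2. rewrite -/B in Hb1 Hb2.
set E := exp (A - 1) in Hwa1 Hwa2.
have HeB : 1 <= exp B by have := exp_ineq1_le B; lra.
have HEge : exp B * exp (M - 1) < E.
  rewrite -exp_plus /E; apply: exp_increasing; lra.
have HeM : M <= exp (M - 1) by have := exp_ineq1_le (M - 1); lra.
have HeM2 := @exp_sq_ge M ltac:(lra).
have HE0 : 0 < exp B * exp (M - 1) by apply: Rmult_lt_0_compat; apply: exp_pos.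
have Hcell : forall j, Rabs (w.1 j) * M <= K.
  move=> j.
  have [Hya _] := Hy k.+1. have [Hxb _] := Hx k.+1.
  have := @abs_cell _ _ _ (Hya j) (Hxb j).
  change (Nat.iter k.+1 f y) with (f a). change (Nat.iter k.+1 f x) with (f b).
  rewrite /f /f_map /pscale /= Hwa1 !Rabs_mult.
  rewrite (Rabs_pos_eq lam); last lra.
  rewrite (Rabs_pos_eq E); last by left; rewrite /E; apply: exp_pos.
  move=> H.
  have H2 := Hb1 j.
  have Hw0 := Rabs_pos (w.1 j).
  (* lam * (E * |w|) <= lam * e^B + 2 <= lam * e^B * K *)
  have H3 : lam * (E * Rabs (w.1 j)) <= lam * exp B * K.
    have : lam * Rabs ((F_full F0 b).1 j) <= lam * exp B by apply: Rmult_le_compat_l; lra.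
    have : lam * exp B * K = lam * exp B + 2 * exp B by rewrite /K; field; lra.
    lra.
  have H4 : exp B * M * Rabs (w.1 j) <= E * Rabs (w.1 j).
    apply: Rmult_le_compat_r => //. have : exp B * M <= exp B * exp (M - 1) by apply: Rmult_le_compat_l; lra. lra.
  have H5 : lam * exp B * (Rabs (w.1 j) * M) <= lam * exp B * K.
    have : lam * (exp B * M * Rabs (w.1 j)) <= lam * (E * Rabs (w.1 j)) by apply: Rmult_le_compat_l; lra.
    lra.
  apply: (Rmult_le_reg_l (lam * exp B)) => //. apply: Rmult_lt_0_compat => //; apply: exp_pos.
have Hsum : sumI (fun j => w.1 j ^ 2) <= INR n * (K ^ 2 / M ^ 2).
  apply: sumI_le => j. have := Hcell j. have := Rabs_pos (w.1 j).
  move=> H0 H1. have H2 : (Rabs (w.1 j) * M) ^ 2 <= K ^ 2 by apply: pow_incr; nra.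
  have HM2 : 0 < M ^ 2 by nra.
  rewrite -(pow2_abs (w.1 j)). apply: (Rmult_le_reg_r (M ^ 2)) => //.
  rewrite /Rdiv Rmult_assoc Rinv_l; last lra.
  rewrite Rpow_mult_distr in H2. lra.
have Hsq : sumI (fun j => w.1 j ^ 2) + w.2 ^ 2 = 1.
  move: Hw1; rewrite /pnorm => H. rewrite -(sqrt_sqrt (sumI (fun j => w.1 j ^ 2) + w.2 ^ 2)).
  by rewrite H; ring.
  have := @sumI_nonneg _ (fun j => w.1 j ^ 2) (fun j => pow2_ge_0 (w.1 j)). have := pow2_ge_0 w.2. lra.
have Hfrac : INR n * (K ^ 2 / M ^ 2) <= 1 / 11.
  have HM2 : 11 * (INR n * K ^ 2) <= M ^ 2 by rewrite /M; nra.
  apply: (Rmult_le_reg_r (M ^ 2)); first nra.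
  field_simplify; lra.
have Hw95 : 95 / 100 <= w.2 by nra.
have He1 := exp1_le.
have HA : exp A = exp 1 * E by rewrite /E -exp_plus; f_equal; ring.
have HEpos : 0 < E by apply: exp_pos.
split.
- rewrite /f /f_map /pscale /= Rabs_mult (Rabs_pos_eq lam); last lra.
  rewrite Hwa2 HA.
  have H1 : lam * (exp 1 * E) / 3 <= lam * E * (10 / 11).
    have : lam * E * exp 1 <= lam * E * (30/11) by apply: Rmult_le_compat_l; nra.
    lra.
  have H2 : lam * E * (95/100) <= lam * (E * w.2).
    have : lam * E * (95/100) <= lam * E * w.2 by apply: Rmult_le_compat_l; nra.
    lra.
  have H3 : M < lam * E * (9 / 220).
    have : lam * (exp (M - 1)) * (9/220) < lam * E * (9/220).
      apply: Rmult_lt_compat_r; first lra. apply: Rmult_lt_compat_l => //. nra.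
    have : M <= lam * exp (M - 1) * (9/220).
      have : M <= lam * (M * M / 4) * (9/220).
        have HMl : 880 / (9 * lam) <= M by rewrite /M; lra.
        have : 880 <= 9 * lam * M.
          have := Rmult_le_compat_l (9 * lam) _ _ ltac:(lra) HMl.
          rewrite /Rdiv (Rmult_comm 880) -Rmult_assoc Rinv_r; lra.
        nra.
      have : lam * (M * M / 4) <= lam * exp (M - 1) by apply: Rmult_le_compat_l; lra.
      lra.
    lra.
  lra.
- rewrite /f /f_map /pscale /= Rabs_mult (Rabs_pos_eq lam); last lra.
  have HeA : 15 * exp B <= exp A.
    have : exp (B + M) <= exp A by apply: Rlt_le; apply: exp_increasing; lra.
    rewrite exp_plus. have := exp_ineq1_le M. have := exp_pos B. nra.
  have : lam * Rabs (F_full F0 b).2 <= lam * exp B by apply: Rmult_le_compat_l; lra.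
  have : lam * (15 * exp B) <= lam * exp A by apply: Rmult_le_compat_l; lra.
  lra.
Qed.
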